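(* Let $C$ be a real $n\times n$ matrix with nonnegative entries that is nilpotent. Then for each $\varepsilon>0$ there exist a diagonal matrix $A$ with nonnegative entries and a matrix $B$ with nonnegative entries such that $C=AB-BA$ and $BA\leq\varepsilon C$ (entrywise).
   Context: Real $n\times n$ matrices are ordered entrywise: $X\leq Y$ means $x_{ij}\leq y_{ij}$ for all $i,j$; a matrix is positive if all its entries are nonnegative. *)

(* Defs.v *)
From mathcomp Require Import all_boot all_order all_algebra.
From mathcomp Require Import reals.
Set Implicit Arguments. Unset Strict Implicit. Unset Printing Implicit Defensive.
Import Order.TTheory GRing.Theory Num.Theory.
Local Open Scope ring_scope.

Definition mx_le (R : realType) (n : nat) (X Y : 'M[R]_n) : Prop :=
  forall i j, X i j <= Y i j.

Definition mx_nonneg (R : realType) (n : nat) (X : 'M[R]_n) : Prop :=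
  forall i j, 0 <= X i j.

Definition mx_diagonal (R : realType) (n : nat) (X : 'M[R]_n) : Prop :=
  forall i j, i != j -> X i j = 0.

Definition mx_nilpotent (R : realType) (n : nat) (X : 'M[R]_n) : Prop :=
  exists k : nat, X ^+ k = 0.

(* Main.v *)
Require Import Defs.
From mathcomp Require Import all_boot all_order all_algebra.
From mathcomp Require Import reals.
From mathcomp Require Import ring lra.
Import Order.TTheory GRing.Theory Num.Theory.
Local Open Scope ring_scope.

Lemma geo (R : realType) n (X : 'M[R]_n) m :
  X * (\sum_(k < m) X ^+ k) + 1 = \sum_(k < m) X ^+ k + X ^+ m.
Proof.
elim: m => [|m IH]; first by rewrite big_ord0 mulr0 !add0r.
by rewrite big_ord_recr /= mulrDr -addrA [_ * X ^+ m + _]addrC addrA IH -exprS.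
Qed.

Lemma nn_mul (R : realType) n (X Y : 'M[R]_n) :
  mx_nonneg X -> mx_nonneg Y -> mx_nonneg (X * Y).
Proof.
move=> hX hY i j; rewrite -mulmxE mxE; apply: sumr_ge0 => k _.
exact: mulr_ge0.
Qed.

Lemma nn_exp (R : realType) n (X : 'M[R]_n) k :
  mx_nonneg X -> mx_nonneg (X ^+ k).
Proof.
move=> hX; elim: k => [|k IH].
  by move=> i j; rewrite expr0 mxE ler0n.
by rewrite exprS; apply: nn_mul.
Qed.

Lemma nn_sum (R : realType) n (X : 'M[R]_n) m :
  mx_nonneg X -> mx_nonneg (\sum_(k < m) X ^+ k).
Proof.
move=> hX i j; rewrite summxE; apply: sumr_ge0 => k _; exact: nn_exp.
Qed.

Lemma expZ (R : realType) n (c : R) (Y : 'M[R]_n) k :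
  (c *: Y) ^+ k = c ^+ k *: Y ^+ k.
Proof.
elim: k => [|k IH]; first by rewrite !expr0 scale1r.
rewrite !exprS IH -!mulmxE -scalemxAl -scalemxAr scalerA.
by [].
Qed.

Theorem proposition4p2 (R : realType) (n : nat) (C : 'M[R]_n) :
  mx_nonneg C -> mx_nilpotent C ->
  forall eps : R, 0 < eps ->
  exists A B : 'M[R]_n,
    [/\ mx_diagonal A, mx_nonneg A, mx_nonneg B,
        C = A *m B - B *m A & mx_le (B *m A) (eps *: C)].
Proof.
move=> hC [m hm] eps he.
set K := 1 + eps^-1.
set S := \sum_i \sum_j (C i j)^-1.
set lam := K * S.
have hK : 1 <= K by rewrite lerDl invr_ge0 ltW.
have hS0 : 0 <= S by apply: sumr_ge0 => i _; apply: sumr_ge0 => j _; rewrite invr_ge0.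
have hSij i j : (C i j)^-1 <= S.
  rewrite /S (bigD1 i) //= (bigD1 j) //= -addrA lerDl.
  apply: addr_ge0; first by apply: sumr_ge0 => k _; rewrite invr_ge0.
  by apply: sumr_ge0 => l _; apply: sumr_ge0 => k _; rewrite invr_ge0.
have hlam0 : 0 <= lam by rewrite mulr_ge0 // (le_trans _ hK).
set X := lam *: C.
have hX : mx_nonneg X by move=> i j; rewrite mxE mulr_ge0.
have hXm : X ^+ m = 0 by rewrite /X expZ hm scaler0.
set M := \sum_(k < m) X ^+ k.
have hM : mx_nonneg M by apply: nn_sum.
have hMe : X * M + 1 = M by rewrite geo hXm addr0.
set a := fun i => \sum_l M i l.
have ha0 i : 0 <= a i by apply: sumr_ge0 => l _.
have haij i j : 1 + X i j * a j <= a i.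
  rewrite {2}/a -hMe.
  under eq_bigr => l _ do rewrite mxE -mulmxE mxE.
  rewrite big_split /= addrC.
  have -> : \sum_(l < n) (1 : 'M[R]_n) i l = 1.
    rewrite (bigD1 i) //= big1 ?addr0; first by rewrite mxE eqxx.
    by move=> l /negbTE hl; rewrite mxE eq_sym hl.
  rewrite lerD2l exchange_big /= (bigD1 j) //= -mulr_sumr lerDl.
  apply: sumr_ge0 => k _; rewrite -mulr_sumr; apply: mulr_ge0 => //.
  by apply: sumr_ge0.
have key i j : C i j != 0 -> 1 + K * a j <= a i.
  move=> hc; apply: le_trans (haij i j); rewrite lerD2l ler_wpM2r //.
  rewrite mxE /lam -mulrA ler_peMr ?(le_trans _ hK) //.
  have hcp : 0 < C i j by rewrite lt_def hc hC.
  by rewrite -(mulVf hc) ler_wpM2r // ltW.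
exists (diag_mx (\row_i a i)), (\matrix_(i, j) (C i j / (a i - a j))).
split.
- by move=> i j hij; rewrite mxE (negbTE hij) mulr0n.
- by move=> i j; rewrite mxE mxE mulrn_wge0.
- move=> i j; rewrite mxE.
  have [->|hc] := eqVneq (C i j) 0; first by rewrite mul0r.
  apply: divr_ge0 => //; rewrite subr_ge0; apply: le_trans (key i j hc).
  have := ler_peMl (ha0 j) hK; lra.
- rewrite mul_diag_mx mul_mx_diag; apply/matrixP => i j; rewrite !mxE.
  have [->|hc] := eqVneq (C i j) 0; first by rewrite !mul0r mulr0 subrr.
  have hd : a i - a j != 0.
    rewrite subr_eq0; apply/negP => /eqP e; have := key i j hc.
    have := ler_peMl (ha0 j) hK; rewrite e; lra.
  by field.
- move=> i j; rewrite mul_mx_diag !mxE.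
  have [->|hc] := eqVneq (C i j) 0; first by rewrite !mul0r mulr0.
  have := key i j hc; rewrite /K mulrDl mul1r => h.
  have hp : 0 <= eps^-1 * a j by rewrite mulr_ge0 // invr_ge0 ltW.
  have hd : 0 < a i - a j by lra.
  have hq : a j <= eps * (a i - a j).
    have e1 : eps * (eps^-1 * a j) = a j by rewrite mulrA mulfV ?gt_eqF // mul1r.
    have := ler_wpM2l (ltW he) h; rewrite !mulrDr e1 mulr1; lra.
  rewrite mulrAC ler_pdivrMr //.
  apply: le_trans (ler_wpM2l (hC i j) hq) _.
  by rewrite mulrA [C i j * eps]mulrC.
Qed.
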